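(* Let $G:\mathbb{R}^{d_x}\to\mathbb{R}$ be $\mu_x$-strongly convex and $L_x$-smooth, $F:\mathbb{R}^{d_y}\to\mathbb{R}\cup\{+\infty\}$ proper closed convex with conjugate $F^\star$, $K:\mathbb{R}^{d_x}\to\mathbb{R}^{d_y}$ linear, and $(x^\star,y^\star)$ a solution of $\min_x\max_y\{G(x)+\langle y,Kx\rangle-F^\star(y)\}$. Choose any $\eta_x,\eta_y>0$ (and any $\beta_y>0$, $\theta\in[0,1]$). Then the iterates of APDA satisfy, for all $k\ge0$, $(1+\mu_x\eta_x)\frac{1}{\eta_x}\|x^{k+1}-x^\star\|^2\le\frac{1}{\eta_x}\|x^k-x^\star\|^2-\frac{1}{\eta_x}\|x^{k+1}-x^k\|^2-2\langle K^\top\bar y^k-K^\top y^\star,x^{k+1}-x^\star\rangle-\frac{1}{L_x}\|\nabla G(x^{k+1})-\nabla G(x^\star)\|^2.$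
   Context: $\mu_x$-strong convexity: $G(x')-G(x'')-\langle\nabla G(x''),x'-x''\rangle\ge\frac{\mu_x}{2}\|x'-x''\|^2$; $L_x$-smoothness: $\|\nabla G(x')-\nabla G(x'')\|\le L_x\|x'-x''\|$. A solution satisfies $\nabla G(x^\star)+K^\top y^\star=0$ and $0\in\partial F^\star(y^\star)-Kx^\star$. APDA: given $(x^0,y^0)$, $\bar y^0=y^0$, stepsizes $\eta_x,\eta_y,\beta_y>0$, $\theta\in[0,1]$, for $k=0,1,\dots$: $x^{k+1}$ satisfies $x^{k+1}=x^k-\eta_x(\nabla G(x^{k+1})+K^\top\bar y^k)$; $y^{k+1}=y^k-\eta_y(g^{k+1}-Kx^{k+1})-\eta_y\beta_yK(K^\top y^k+\nabla G(x^{k+1}))$ with $g^{k+1}\in\partial F^\star(y^{k+1})$ (a proximal step on $F^\star$); $\bar y^{k+1}=y^{k+1}+\theta(y^{k+1}-y^k)$. *)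

(* Defs.v *)
From HB Require Import structures.
From mathcomp Require Import all_boot all_order all_algebra.
From mathcomp Require Import all_classical all_reals all_analysis.
Set Implicit Arguments. Unset Strict Implicit. Unset Printing Implicit Defensive.
Import Order.TTheory GRing.Theory Num.Theory.
Import numFieldNormedType.Exports.
Local Open Scope ring_scope.
Local Open Scope classical_set_scope.

Definition dotv (R : realType) (n : nat) (u v : 'cV[R]_n) : R := (u^T *m v) 0 0.
Definition sqnorm (R : realType) (n : nat) (u : 'cV[R]_n) : R := dotv u u.
Definition enorm (R : realType) (n : nat) (u : 'cV[R]_n) : R := Num.sqrt (sqnorm u).

Definition is_gradient (R : realType) (n : nat) (G : 'cV[R]_n -> R)
  (gradG : 'cV[R]_n -> 'cV[R]_n) : Prop :=
  forall x v : 'cV[R]_n,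
    is_derive (0 : R) (1 : R) (fun t : R => G (x + t *: v)) (dotv (gradG x) v).

Definition strongly_convex (R : realType) (n : nat) (mu : R) (G : 'cV[R]_n -> R)
  (gradG : 'cV[R]_n -> 'cV[R]_n) : Prop :=
  forall x1 x2, G x1 - G x2 - dotv (gradG x2) (x1 - x2) >= mu / 2 * sqnorm (x1 - x2).

Definition smooth (R : realType) (n : nat) (L : R)
  (gradG : 'cV[R]_n -> 'cV[R]_n) : Prop :=
  forall x1 x2, enorm (gradG x1 - gradG x2) <= L * enorm (x1 - x2).

Definition proper_fun (R : realType) (n : nat) (F : 'cV[R]_n -> \bar R) : Prop :=
  (forall y, F y != -oo%E) /\ (exists y, F y != +oo%E).

(* closed = the epigraph is closed (equivalently F is lower semicontinuous) *)
Definition closed_fun (R : realType) (n : nat) (F : 'cV[R]_n -> \bar R) : Prop :=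
  closed [set p : 'cV[R]_n * R | (F p.1 <= p.2%:E)%E].

(* convex = the epigraph is convex *)
Definition convex_fun (R : realType) (n : nat) (F : 'cV[R]_n -> \bar R) : Prop :=
  forall (a b : 'cV[R]_n) (ra rb t : R), (F a <= ra%:E)%E -> (F b <= rb%:E)%E ->
    0 <= t <= 1 -> (F (t *: a + (1 - t) *: b)%R <= (t * ra + (1 - t) * rb)%R%:E)%E.

Definition fconj (R : realType) (n : nat) (F : 'cV[R]_n -> \bar R) (y : 'cV[R]_n)
  : \bar R := ereal_sup [set ((dotv y x)%:E - F x)%E | x in [set: 'cV[R]_n]].

Definition subgrad (R : realType) (n : nat) (f : 'cV[R]_n -> \bar R)
  (y g : 'cV[R]_n) : Prop :=
  f y \is a fin_num /\ forall z, (f y + (dotv g (z - y))%:E <= f z)%E.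

(* Main.v *)
Require Import Defs.
From HB Require Import structures.
From mathcomp Require Import all_boot all_order all_algebra.
From mathcomp Require Import all_classical all_reals all_analysis.
From mathcomp Require Import ring lra.
Import Order.TTheory GRing.Theory Num.Theory.
Import numFieldNormedType.Exports.
Local Open Scope ring_scope.

Section LA.
Variables (R : realType) (n : nat).
Implicit Types u v w : 'cV[R]_n.

Lemma dotvE u v : dotv u v = \sum_i u i 0 * v i 0.
Proof. by rewrite /dotv !mxE; apply: eq_bigr => i _; rewrite !mxE. Qed.

Lemma dotvC u v : dotv u v = dotv v u.
Proof. by rewrite !dotvE; apply: eq_bigr => i _; rewrite mulrC. Qed.

Lemma dotvDl u v w : dotv (u + v) w = dotv u w + dotv v w.
Proof. by rewrite !dotvE -big_split; apply: eq_bigr => i _; rewrite mxE mulrDl. Qed.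

Lemma dotvZl (a : R) u v : dotv (a *: u) v = a * dotv u v.
Proof. by rewrite !dotvE mulr_sumr; apply: eq_bigr => i _; rewrite mxE mulrA. Qed.

Lemma dotvNl u v : dotv (- u) v = - dotv u v.
Proof. by rewrite -scaleN1r dotvZl mulN1r. Qed.

Lemma dotvBl u v w : dotv (u - v) w = dotv u w - dotv v w.
Proof. by rewrite dotvDl dotvNl. Qed.

Lemma dotvDr u v w : dotv w (u + v) = dotv w u + dotv w v.
Proof. by rewrite dotvC dotvDl !(dotvC w). Qed.
Lemma dotvZr (a : R) u v : dotv v (a *: u) = a * dotv v u.
Proof. by rewrite dotvC dotvZl dotvC. Qed.
Lemma dotvNr u v : dotv v (- u) = - dotv v u.
Proof. by rewrite dotvC dotvNl dotvC. Qed.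
Lemma dotvBr u v w : dotv w (u - v) = dotv w u - dotv w v.
Proof. by rewrite dotvDr dotvNr. Qed.

Lemma sqnorm_ge0 u : 0 <= sqnorm u.
Proof. by rewrite /sqnorm dotvE; apply: sumr_ge0 => i _; rewrite -expr2 sqr_ge0. Qed.

Lemma enorm_sq u : enorm u ^+ 2 = sqnorm u.
Proof. by rewrite /enorm sqr_sqrtr // sqnorm_ge0. Qed.

End LA.
Local Open Scope classical_set_scope.
Local Open Scope ring_scope.

Lemma shift_is_derive (R : realType) (f f0 : R -> R) (t0 d : R) :
  (forall h, f (h + t0) = f0 h) -> is_derive (0:R) (1:R) f0 d -> is_derive t0 (1:R) f d.
Proof.
move=> H [D1 D2].
have E : (fun h : R => h^-1 *: ((f \o shift t0) (h *: 1) - f t0)) =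
         (fun h : R => h^-1 *: ((f0 \o shift 0) (h *: 1) - f0 0)).
  apply: funext => h /=; by rewrite H -{1}(add0r t0) H addr0.
split; first by rewrite /derivable E.
by rewrite /derive E.
Qed.

Lemma descent (R : realType) (n : nat) (G : 'cV[R]_n -> R) gradG (L : R) :
  0 < L -> is_gradient G gradG -> smooth L gradG ->
  forall x v, G (x + v) <= G x + dotv (gradG x) v + L / 2 * sqnorm v.
Proof.
move=> L0 hg hs x v.
pose c1 := dotv (gradG x) v.
pose c2 := L / 2 * sqnorm v.
pose h := fun t : R => G (x + t *: v) - t * c1 - c2 * (t * t).
pose dh := fun t : R => dotv (gradG (x + t *: v)) v - c1 - c2 * (t + t).
have Hd : forall t : R, is_derive t (1:R) h (dh t).
  move=> t.
  have g1 : is_derive t (1:R) (fun t => G (x + t *: v)) (dotv (gradG (x + t *: v)) v).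
    apply: (@shift_is_derive R _ (fun s => G ((x + t *: v) + s *: v))).
      by move=> s; rewrite scalerDl addrA addrAC.
    exact: hg.
  have g2 : is_derive t (1:R) (fun t : R => t * c1) c1.
    have H := @is_deriveM R R id (cst c1) t 1 1 0 (is_derive_id t 1) (is_derive_cst c1 t 1).
    apply: (is_derive_eq H).
    by rewrite /= scaler0 add0r /GRing.scale /= mulr1.
  have g3 : is_derive t (1:R) (fun t : R => c2 * (t * t)) (c2 * (t + t)).
    have H1 := @is_deriveM R R id id t 1 1 1 (is_derive_id t 1) (is_derive_id t 1).
    have H := @is_deriveM R R (cst c2) (id * id) t 1 0 _ (is_derive_cst c2 t 1) H1.
    apply: (is_derive_eq H).
    by rewrite /= scaler0 addr0 /GRing.scale /= !mulr1.
  have H := is_deriveB (is_deriveB g1 g2) g3.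
  apply: (is_derive_eq H).
  by [].
have hc : {within `[0, 1], continuous h}.
  by apply: derivable_within_continuous => t _; case: (Hd t).
have [c cin E] := MVT (@ltr01 R) (fun t _ => Hd t) hc.
move: cin; rewrite in_itv /= => /andP[c0 c1lt].
have sqZ : forall (a : R) (w : 'cV[R]_n), sqnorm (a *: w) = a ^+ 2 * sqnorm w.
  by move=> a w; rewrite /sqnorm dotvZl dotvZr mulrA expr2.
set u := gradG (x + c *: v) - gradG x.
have Hu : sqnorm u <= L ^+ 2 * (c ^+ 2 * sqnorm v).
  have := hs (x + c *: v) x; rewrite addrAC subrr add0r -/u => H.
  rewrite -sqZ -enorm_sq -enorm_sq -exprMn.
  by rewrite lerXn2r // ?nnegrE /enorm ?sqrtr_ge0 // mulr_ge0 // ?sqrtr_ge0 // ltW.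
have Hn := @sqnorm_ge0 _ _ (u - (L * c) *: v).
have Hexp0 : forall (w z : 'cV[R]_n) (a : R), sqnorm (w - a *: z) = sqnorm w - 2 * a * dotv w z + a ^+ 2 * sqnorm z.
  move=> w z a; rewrite /sqnorm !dotvBl !dotvBr !dotvZl !dotvZr (@dotvC _ _ z w); ring.
have Hexp := Hexp0 u v (L * c).
rewrite Hexp in Hn.
have Lc0 : 0 < L * c by rewrite mulr_gt0.
have key : dotv u v <= L * c * sqnorm v.
  rewrite -(ler_pM2l Lc0); nra.
have Hdc : dh c <= 0.
  rewrite /dh /c2 /c1.
  have -> : dotv (gradG (x + c *: v)) v = dotv u v + dotv (gradG x) v.
    by rewrite /u dotvBl subrK.
  nra.
have : h 1 - h 0 <= 0 by rewrite E subr0 mulr1.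
rewrite /h scale1r scale0r addr0 /c1 /c2; lra.
Qed.

Lemma cocoer (R : realType) (n : nat) (G : 'cV[R]_n -> R) gradG (mu L : R) :
  0 < L -> is_gradient G gradG -> strongly_convex mu G gradG -> 0 <= mu -> smooth L gradG ->
  forall a b, G b + dotv (gradG b) (a - b) + (1 / L) / 2 * sqnorm (gradG a - gradG b) <= G a.
Proof.
move=> L0 hg hsc mu0 hs a b.
set d := gradG a - gradG b.
set il := 1 / L.
set v := - (il *: d).
have DL := @descent _ _ G gradG L L0 hg hs a v.
have SC := hsc (a + v) b.
have Hsq : 0 <= mu / 2 * sqnorm (a + v - b).
  by rewrite mulr_ge0 ?sqnorm_ge0 // divr_ge0.
have E1 : dotv (gradG b) (a + v - b) = dotv (gradG b) (a - b) - il * dotv (gradG b) d.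
  by rewrite addrAC dotvDr /v dotvNr dotvZr.
have E2 : dotv (gradG a) v = - (il * dotv (gradG a) d).
  by rewrite /v dotvNr dotvZr.
have E3 : sqnorm v = il ^+ 2 * sqnorm d.
  by rewrite /sqnorm /v dotvNl dotvNr opprK dotvZl dotvZr mulrA expr2.
have E4 : sqnorm d = dotv (gradG a) d - dotv (gradG b) d.
  by rewrite {1}/sqnorm {1}/d dotvBl.
rewrite E1 in SC; rewrite E2 E3 in DL.
have E5 : L / 2 * (il ^+ 2 * sqnorm d) = il / 2 * sqnorm d.
  rewrite /il; field; exact: lt0r_neq0.
rewrite E5 in DL.
have E6 : il * dotv (gradG a) d - il * dotv (gradG b) d = il * sqnorm d.
  by rewrite E4 mulrBr.
lra.
Qed.
Theorem lemma6 (R : realType) (dx dy : nat)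
  (G : 'cV[R]_dx -> R) (gradG : 'cV[R]_dx -> 'cV[R]_dx) (mux Lx : R)
  (F : 'cV[R]_dy -> \bar R) (K : 'M[R]_(dy, dx))
  (xs : 'cV[R]_dx) (ys : 'cV[R]_dy)
  (etax etay betay theta : R)
  (x : nat -> 'cV[R]_dx) (y ybar g : nat -> 'cV[R]_dy) :
  0 < mux -> 0 < Lx ->
  is_gradient G gradG -> strongly_convex mux G gradG -> smooth Lx gradG ->
  proper_fun F -> closed_fun F -> convex_fun F ->
  (* (xs, ys) is a saddle point / solution *)
  gradG xs + K^T *m ys = 0 ->
  subgrad (fconj F) ys (K *m xs) ->
  0 < etax -> 0 < etay -> 0 < betay -> 0 <= theta <= 1 ->
  (* APDA iterates *)
  ybar 0%N = y 0%N ->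
  (forall k : nat, x k.+1 = x k - etax *: (gradG (x k.+1) + K^T *m ybar k)) ->
  (forall k : nat, subgrad (fconj F) (y k.+1) (g k.+1)) ->
  (forall k : nat, y k.+1 = y k - etay *: (g k.+1 - K *m x k.+1)
                        - (etay * betay) *: (K *m (K^T *m y k + gradG (x k.+1)))) ->
  (forall k : nat, ybar k.+1 = y k.+1 + theta *: (y k.+1 - y k)) ->
  forall k : nat,
    (1 + mux * etax) * (1 / etax) * sqnorm (x k.+1 - xs)
    <= (1 / etax) * sqnorm (x k - xs) - (1 / etax) * sqnorm (x k.+1 - x k)
       - 2 * dotv (K^T *m ybar k - K^T *m ys) (x k.+1 - xs)
       - (1 / Lx) * sqnorm (gradG (x k.+1) - gradG xs).
Proof.
move=> mu0 L0 hg hsc hs _ _ _ Hsad _ eta0 _ _ _ _ Hx _ _ _ k.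
set a := x k.+1; set b := x k.
set ga := gradG a; set gs := gradG xs.
set w := ga + K^T *m ybar k.
have Hab : a = b - etax *: w by rewrite /a Hx.
have Eb : b - xs = (a - xs) + etax *: w by rewrite Hab addrAC subrK.
have Eab : a - b = - (etax *: w) by rewrite Hab addrAC subrr add0r.
have Eys : K^T *m ys = - gs by apply/eqP; rewrite -addr_eq0 addrC Hsad.
have Ek : K^T *m ybar k - K^T *m ys = w - (ga - gs).
  by rewrite Eys opprK /w opprB addrA addrAC (addrC ga) addrK.
rewrite Eb Eab Ek.
set uu := a - xs; set dd := ga - gs.
have SC1 := hsc a xs.
have SC2 := hsc xs a.
have CC1 := @cocoer _ _ G gradG mux Lx L0 hg hsc (ltW mu0) hs a xs.
have CC2 := @cocoer _ _ G gradG mux Lx L0 hg hsc (ltW mu0) hs xs a.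
have Exa : xs - a = - uu by rewrite opprB.
have Egg : gradG xs - gradG a = - dd by rewrite opprB.
rewrite Exa in SC2 CC2; rewrite Egg in CC2.
rewrite -/ga -/gs -/uu in SC1 SC2 CC1 CC2.
rewrite -/dd in CC1.
have sqN : forall z : 'cV[R]_dx, sqnorm (- z) = sqnorm z.
  by move=> z; rewrite /sqnorm dotvNl dotvNr opprK.
rewrite sqN in SC2 CC2.
rewrite dotvNr in SC2 CC2.
have Ed : dotv dd uu = dotv ga uu - dotv gs uu by rewrite /dd dotvBl.
have key : mux * sqnorm uu + 1 / Lx * sqnorm dd <= 2 * dotv dd uu.
  lra.
have E1 : sqnorm (uu + etax *: w) = sqnorm uu + 2 * etax * dotv w uu + etax ^+ 2 * sqnorm w.
  have gen : forall (p q : 'cV[R]_dx) (t : R), sqnorm (p + t *: q) = sqnorm p + 2 * t * dotv q p + t ^+ 2 * sqnorm q.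
    move=> p q t; rewrite /sqnorm dotvDl !dotvDr !dotvZl !dotvZr (@dotvC _ _ p q); ring.
  exact: gen.
have E2 : sqnorm (- (etax *: w)) = etax ^+ 2 * sqnorm w.
  by rewrite sqN /sqnorm dotvZl dotvZr mulrA expr2.
have E3 : dotv (w - dd) uu = dotv w uu - dotv dd uu by rewrite dotvBl.
rewrite E1 E2 E3.
rewrite -subr_ge0.
have -> : 1 / etax * (sqnorm uu + 2 * etax * dotv w uu + etax ^+ 2 * sqnorm w) -
   1 / etax * (etax ^+ 2 * sqnorm w) - 2 * (dotv w uu - dotv dd uu) -
   1 / Lx * sqnorm dd - (1 + mux * etax) * (1 / etax) * sqnorm uu
   = 2 * dotv dd uu - mux * sqnorm uu - 1 / Lx * sqnorm dd.
  field; by rewrite !lt0r_neq0.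
lra.
Qed.
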